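(* Let $b,c\in Z^{10}$ with $\sum_i b_i=\sum_i c_i=0$. Let $j\in\{1,3,5,7,9\}$ and let $i_1,i_2,i_3,i_4$ be the remaining four odd indices listed in cyclic order. Assume $t\mid B_j$, $t\mid C_j$, and $t\nmid B_{i_l}$, $t\nmid C_{i_l}$ for $l=1,2,3,4$. Assume moreover $t\nmid B_{i_1}+B_{i_2}$, $t\mid B_{i_2}+B_{i_3}$, $t\nmid C_{i_1}+C_{i_2}$ and $t\mid C_{i_2}+C_{i_3}$. Then $\mathbb{M}(b)$ and $\mathbb{M}(c)$ are isomorphic $B_{5,10}$-modules.
   Context: Let $Z=\mathbb{C}[[t]]$. Let $\Gamma_{10}$ be the quiver with vertices $0,1,\dots,9$ (indices taken mod $10$) on a cycle and arrows $x_i\colon i-1\to i$, $y_i\colon i\to i-1$ for $i=1,\dots,10$. Let $B_{5,10}$ be the completed path algebra of $\Gamma_{10}$ modulo the closed ideal generated by $xy=yx$ and $x^5=y^5$ at every vertex. For $b=(b_1,\dots,b_{10})\in Z^{10}$ with $\sum_i b_i=0$, the $B_{5,10}$-module $\mathbb{M}(b)$ has $V_i=Z\oplus Z$ at every vertex, and for odd $j$: $x_j=\begin{pmatrix} t& b_j\\ 0&1\end{pmatrix}$, $y_j=\begin{pmatrix} 1&-b_j\\0&t\end{pmatrix}$; for even $j$: $x_j=\begin{pmatrix}1&b_j\\0&t\end{pmatrix}$, $y_j=\begin{pmatrix}t&-b_j\\0&1\end{pmatrix}$. An isomorphism $\mathbb{M}(b)\to\mathbb{M}(c)$ is a family of invertible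 $Z$-linear maps $\varphi_i\colon Z^2\to Z^2$ commuting with all $x_i$ and $y_i$. For odd $i$ write $B_i=b_i+b_{i+1}$ and $C_i=c_i+c_{i+1}$ (indices mod $10$). *)

(* Defs.v *)
From HB Require Import structures.
From mathcomp Require Import all_boot all_order all_algebra.
From mathcomp Require Import boolp.
From mathcomp Require Import complex.
From mathcomp Require Import Rstruct.
Set Implicit Arguments. Unset Strict Implicit. Unset Printing Implicit Defensive.
Import Order.TTheory GRing.Theory Num.Theory.
Local Open Scope ring_scope.

Record fps (K : Type) := FPS { coef : nat -> K }.

HB.instance Definition _ (K : Type) := gen_eqMixin (fps K).
HB.instance Definition _ (K : Type) := gen_choiceMixin (fps K).

Lemma fpsP (K : Type) (f g : fps K) : (forall n, coef f n = coef g n) -> f = g.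
Proof. by case: f; case: g => a b /= H; congr FPS; apply: funext. Qed.

Definition fps0 (K : nmodType) : fps K := FPS (fun _ => 0).
Definition fpsD (K : nmodType) (f g : fps K) := FPS (fun n => coef f n + coef g n).
Definition fpsN (K : zmodType) (f : fps K) := FPS (fun n => - coef f n).

Fact fpsA (K : zmodType) : associative (@fpsD K).
Proof. by move=> f g h; apply: fpsP => n /=; rewrite addrA. Qed.
Fact fpsC (K : zmodType) : commutative (@fpsD K).
Proof. by move=> f g; apply: fpsP => n /=; rewrite addrC. Qed.
Fact fps0D (K : zmodType) : left_id (@fps0 K) (@fpsD K).
Proof. by move=> f; apply: fpsP => n /=; rewrite add0r. Qed.
Fact fpsND (K : zmodType) : left_inverse (@fps0 K) (@fpsN K) (@fpsD K).
Proof. by move=> f; apply: fpsP => n /=; rewrite addNr. Qed.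

HB.instance Definition _ (K : zmodType) :=
  GRing.isZmodule.Build (fps K) (@fpsA K) (@fpsC K) (@fps0D K) (@fpsND K).

Definition fps1 (K : comNzRingType) : fps K := FPS (fun n => (n == 0)%:R).
Definition fpsM (K : comNzRingType) (f g : fps K) :=
  FPS (fun i => \sum_(j < i.+1) coef f j * coef g (i - j)).

Fact coef_fpsM (K : comNzRingType) (f g : fps K) i :
  coef (fpsM f g) i = \sum_(j < i.+1) coef f j * coef g (i - j).
Proof. by []. Qed.

Fact fpsM_rev (K : comNzRingType) (f g : fps K) i :
  coef (fpsM f g) i = \sum_(j < i.+1) coef f (i - j) * coef g j.
Proof.
rewrite /= (reindex_inj rev_ord_inj) /=.
by apply: eq_bigr => j _; rewrite (sub_ordK j).
Qed.

Fact fpsMA (K : comNzRingType) : associative (@fpsM K).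
Proof.
move=> p q r; apply: fpsP=> i; rewrite coef_fpsM fpsM_rev.
pose coef3 j k := coef p j * (coef q (i - j - k) * coef r k).
transitivity (\sum_(j < i.+1) \sum_(k < i.+1 | (k <= i - j)%N) coef3 j k).
  apply: eq_bigr => j _; rewrite fpsM_rev big_distrr /=.
  by rewrite (big_ord_narrow_leq (leq_subr _ _)).
rewrite (exchange_big_dep predT) //=; apply: eq_bigr => k _.
transitivity (\sum_(j < i.+1 | (j <= i - k)%N) coef3 j k).
  apply: eq_bigl => j; rewrite -ltnS -(ltnS j) -!subSn ?leq_ord //.
  by rewrite -subn_gt0 -(subn_gt0 j) -!subnDA addnC.
rewrite (big_ord_narrow_leq (leq_subr _ _)) big_distrl /=.
by apply: eq_bigr => j _; rewrite /coef3 -!subnDA addnC mulrA.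
Qed.

Fact fpsMC (K : comNzRingType) : commutative (@fpsM K).
Proof.
move=> f g; apply: fpsP => i; rewrite coef_fpsM fpsM_rev.
by apply: eq_bigr => j _; rewrite mulrC.
Qed.

Fact fps1M (K : comNzRingType) : left_id (@fps1 K) (@fpsM K).
Proof.
move=> p; apply: fpsP => i; rewrite /= big_ord_recl subn0 /= mul1r.
by rewrite big1 ?addr0 // => j _; rewrite mul0r.
Qed.

Fact fpsMDl (K : comNzRingType) : left_distributive (@fpsM K) (@fpsD K).
Proof.
move=> p q r; apply: fpsP=> i; rewrite /= -big_split.
by apply: eq_bigr => j _; rewrite mulrDl.
Qed.

Fact fps1_neq0 (K : comNzRingType) : @fps1 K != @fps0 K.
Proof.
apply/eqP => /(congr1 (fun f => coef f 0)) /=; apply/eqP; exact: oner_neq0.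
Qed.

HB.instance Definition _ (K : comNzRingType) :=
  GRing.Zmodule_isComNzRing.Build (fps K) (@fpsMA K) (@fpsMC K) (@fps1M K)
    (@fpsMDl K) (@fps1_neq0 K).


Notation CC := (complex Rdefinitions.R).
Notation Z := (fps CC).

Definition tZ : Z := FPS (fun n => (n == 1)%N%:R).

Definition tdvd (a : Z) : Prop := exists q : Z, a = tZ * q.

Definition mx2 (a b c d : Z) : 'M[Z]_2 :=
  \matrix_(r < 2, s < 2)
    if r == 0 then (if s == 0 then a else b) else (if s == 0 then c else d).

(* Vertices and arrow indices are taken mod 10 and represented in 'I_10;
   the index 10 is represented by 0.  Arrow x_j : j-1 -> j, y_j : j -> j-1. *)
Definition xmat (b : 'I_10 -> Z) (j : 'I_10) : 'M[Z]_2 :=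
  if odd j then mx2 tZ (b j) 0 1 else mx2 1 (b j) 0 tZ.
Definition ymat (b : 'I_10 -> Z) (j : 'I_10) : 'M[Z]_2 :=
  if odd j then mx2 1 (- b j) 0 tZ else mx2 tZ (- b j) 0 1.

(* An isomorphism M(b) -> M(c) of B_{5,10}-modules: a family of invertible
   Z-linear maps phi_i : Z^2 -> Z^2 (matrices acting on column vectors)
   commuting with all x_j and y_j. *)
Definition Miso (b c : 'I_10 -> Z) (phi : 'I_10 -> 'M[Z]_2) : Prop :=
  (forall i : 'I_10, exists psi : 'M[Z]_2,
      phi i *m psi = 1%:M /\ psi *m phi i = 1%:M) /\
  (forall j : 'I_10,
      phi j *m xmat b j = xmat c j *m phi (ord_pred j) /\
      phi (ord_pred j) *m ymat b j = ymat c j *m phi j).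

Definition Misomorphic (b c : 'I_10 -> Z) : Prop := exists phi, Miso b c phi.

Definition Bsum (b : 'I_10 -> Z) (i : 'I_10) : Z := b i + b (ordS i).

Definition shift2 (j : 'I_10) (l : nat) : 'I_10 := inord ((j + 2 * l) %% 10).

(* Main.v *)
Require Import Defs.
From HB Require Import structures.
From mathcomp Require Import all_boot all_order all_algebra.
From mathcomp Require Import complex Rstruct.
From mathcomp Require Import ring.
Local Open Scope ring_scope.
Import GRing.Theory.


Definition cst (z : CC) : Z := FPS (fun n => if n is 0%N then z else 0).
Definition c0 (f : Z) : CC := coef f 0.
Definition divt (f : Z) : Z := FPS (fun n => coef f n.+1).

Lemma c0D (f g : Z) : c0 (f + g) = c0 f + c0 g. Proof. by []. Qed.
Lemma c0N (f : Z) : c0 (- f) = - c0 f. Proof. by []. Qed.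
Lemma c0B (f g : Z) : c0 (f - g) = c0 f - c0 g. Proof. by []. Qed.
Lemma c0M (f g : Z) : c0 (f * g) = c0 f * c0 g.
Proof. by rewrite /c0 /= big_ord1 subnn. Qed.
Lemma c00 : c0 0 = 0. Proof. by []. Qed.
Lemma c0cst z : c0 (cst z) = z. Proof. by []. Qed.
Lemma c0t : c0 tZ = 0. Proof. by []. Qed.

Lemma cstMl z (f : Z) n : coef (cst z * f) n = z * coef f n.
Proof.
rewrite coef_fpsM big_ord_recl /= subn0 big1 ?addr0 // => i _.
by rewrite mul0r.
Qed.

Lemma cstM z w : cst z * cst w = cst (z * w).
Proof. by apply: fpsP => n; rewrite cstMl; case: n => //= n; rewrite mulr0. Qed.

Lemma cst1 : cst 1 = 1.
Proof. by apply: fpsP => -[|n]. Qed.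

Lemma coef_tM (f : Z) n : coef (tZ * f) n.+1 = coef f n.
Proof.
rewrite coef_fpsM big_ord_recl /= mul0r add0r big_ord_recl /= mul1r subn1 /=.
rewrite big1 ?addr0 // => i _; by rewrite /= mul0r.
Qed.

Lemma tdivt (f : Z) : c0 f = 0 -> tZ * divt f = f.
Proof.
move=> h; apply: fpsP => -[|n].
  by rewrite -/(c0 (tZ * divt f)) c0M c0t mul0r -h.
by rewrite coef_tM.
Qed.

Lemma tdvdP (f : Z) : tdvd f <-> c0 f = 0.
Proof.
split; first by case=> q ->; rewrite c0M c0t mul0r.
by move=> h; exists (divt f); rewrite tdivt.
Qed.

Lemma mx2M (a b c d a' b' c' d' : Z) :
  mx2 a b c d *m mx2 a' b' c' d' =
  mx2 (a * a' + b * c') (a * b' + b * d') (c * a' + d * c') (c * b' + d * d').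
Proof.
apply/matrixP => i j; rewrite !mxE !big_ord_recr big_ord0 /= !mxE /= add0r.
by case: i => -[|[|//]] ?; case: j => -[|[|//]] ?.
Qed.

Lemma mx2_1 : (1%:M : 'M[Z]_2) = mx2 1 0 0 1.
Proof.
by apply/matrixP => i j; rewrite !mxE; case: i => -[|[|//]] ?; case: j => -[|[|//]] ?.
Qed.

Lemma mx2_eq (a b c d a' b' c' d' : Z) :
  a = a' -> b = b' -> c = c' -> d = d' -> mx2 a b c d = mx2 a' b' c' d'.
Proof. by move=> -> -> -> ->. Qed.

Lemma eq_mod (x y d : Z) : d = 0 -> x - d = y -> x = y.
Proof. by move=> -> <-; rewrite subr0. Qed.
Lemma eq_mod2 (x y d : Z) : d = 0 -> x = y - d -> x = y.
Proof. by move=> -> ->; rewrite subr0. Qed.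
Arguments eq_mod {x y d}.
Arguments eq_mod2 {x y d}.
Lemma eq_modk (k x y d : Z) : d = 0 -> x - k * d = y -> x = y.
Proof. by move=> -> <-; rewrite mulr0 subr0. Qed.



Definition bn (b : 'I_10 -> Z) (n : nat) : Z := b (inord n).
Fixpoint PS (b : 'I_10 -> Z) (n : nat) : Z :=
  if n is m.+1 then PS b m + bn b m.+1 else 0.

Section S.
End S.

Definition pp (c : 'I_10 -> Z) p0 sg n := cst p0 + cst sg * PS c n.
Definition ss (b : 'I_10 -> Z) s0 sg n := cst s0 - cst sg * PS b n.
Definition QQ (b c : 'I_10 -> Z) p0 s0 sg n :=
  cst s0 * PS c n - cst p0 * PS b n - cst sg * PS b n * PS c n.
Definition phim b c p0 s0 sg n :=
  if odd n then mx2 (pp c p0 sg n) (QQ b c p0 s0 sg n) (cst sg) (ss b s0 sg n)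
  else mx2 (pp c p0 sg n) (divt (QQ b c p0 s0 sg n)) (tZ * cst sg) (ss b s0 sg n).
Definition Xm (o : bool) z := if o then mx2 tZ z 0 1 else mx2 1 z 0 tZ.
Definition Ym (o : bool) z := if o then mx2 1 (- z) 0 tZ else mx2 tZ (- z) 0 1.

Ltac rg E := first [ring | apply: (eq_mod E); ring | apply: (eq_mod2 E); ring].

Lemma step b c p0 s0 sg m :
  (~~ odd m -> c0 (QQ b c p0 s0 sg m) = 0) ->
  (odd m -> c0 (QQ b c p0 s0 sg m.+1) = 0) ->
  phim b c p0 s0 sg m.+1 *m Xm (odd m.+1) (bn b m.+1)
    = Xm (odd m.+1) (bn c m.+1) *m phim b c p0 s0 sg m /\
  phim b c p0 s0 sg m *m Ym (odd m.+1) (bn b m.+1)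
    = Ym (odd m.+1) (bn c m.+1) *m phim b c p0 s0 sg m.+1.
Proof.
move=> h1 h2; rewrite /phim /Xm /Ym /=.
case hm: (odd m) => /=.
- have E : tZ * divt (QQ b c p0 s0 sg m.+1) - QQ b c p0 s0 sg m.+1 = 0.
    by rewrite tdivt ?subrr // h2.
  move: E; move: (divt (QQ b c p0 s0 sg m.+1)) => q E.
  rewrite /QQ /pp /ss /= in E *.
  rewrite !mx2M; split; apply: mx2_eq; rg E.
- have E : tZ * divt (QQ b c p0 s0 sg m) - QQ b c p0 s0 sg m = 0.
    by rewrite tdivt ?subrr // h1 ?hm.
  move: E; move: (divt (QQ b c p0 s0 sg m)) => q E.
  rewrite /QQ /pp /ss /= in E *.
  rewrite !mx2M; split; apply: mx2_eq; rg E.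
Qed.

Lemma inv2 (P Q R S : Z) (K1 K2 : CC) : K1 * K2 != 0 -> P * S - Q * R = cst K1 * cst K2 ->
  let k := cst (K1 * K2)^-1 in
  mx2 P Q R S *m mx2 (k * S) (k * - Q) (k * - R) (k * P) = 1%:M /\
  mx2 (k * S) (k * - Q) (k * - R) (k * P) *m mx2 P Q R S = 1%:M.
Proof.
move=> hK hD k.
have e : k * (P * S - Q * R) = 1 by rewrite hD /k !cstM mulVf // cst1.
rewrite !mx2M mx2_1; split; apply: mx2_eq; rewrite -?e; ring.
Qed.

Definition psim b c p0 s0 sg n :=
  let k := cst (p0 * s0)^-1 in
  if odd n then mx2 (k * ss b s0 sg n) (k * - QQ b c p0 s0 sg n) (k * - cst sg) (k * pp c p0 sg n)
  else mx2 (k * ss b s0 sg n) (k * - divt (QQ b c p0 s0 sg n)) (k * - (tZ * cst sg)) (k * pp c p0 sg n).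

Lemma phiinv b c (p0 s0 sg : CC) n : p0 * s0 != 0 ->
  (~~ odd n -> c0 (QQ b c p0 s0 sg n) = 0) ->
  phim b c p0 s0 sg n *m psim b c p0 s0 sg n = 1%:M /\
  psim b c p0 s0 sg n *m phim b c p0 s0 sg n = 1%:M.
Proof.
move=> hK h; rewrite /phim /psim; case hn: (odd n); apply: inv2 => //.
  rewrite /pp /ss /QQ; ring.
have E : tZ * divt (QQ b c p0 s0 sg n) - QQ b c p0 s0 sg n = 0.
  by rewrite tdivt ?subrr // h ?hn.
move: E; move: (divt (QQ b c p0 s0 sg n)) => q E.
rewrite /pp /ss /QQ in E *; apply: (eq_modk (- cst sg) _ _ _ E); ring.
Qed.



Lemma bn10 (b : 'I_10 -> Z) : bn b 10 = bn b 0.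
Proof. by rewrite /bn; congr b; apply: val_inj; rewrite /inord !val_insubd. Qed.

Lemma PS10 (b : 'I_10 -> Z) : PS b 10 = \sum_(i < 10) b i.
Proof.
rewrite (eq_bigr (fun i : 'I_10 => bn b i)); last by move=> i _; rewrite /bn inord_val.
rewrite !big_ord_recr big_ord0 /= bn10; ring.
Qed.

Lemma ord_pred_val (j : 'I_10) : val (ord_pred j) = (if val j is m.+1 then m else 9)%N.
Proof. by case: j => -[|[|[|[|[|[|[|[|[|[|//]]]]]]]]]]. Qed.

Lemma iso_gen (b c : 'I_10 -> Z) (hb : \sum_(i < 10) b i = 0) (hc : \sum_(i < 10) c i = 0)
  (p0 s0 sg : CC) (hK : p0 * s0 != 0)
  (hQ : forall m, (1 <= m <= 4)%N -> c0 (QQ b c p0 s0 sg (2 * m)) = 0) :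
  Misomorphic b c.
Proof.
have hb10 : PS b 10 = 0 by rewrite PS10.
have hc10 : PS c 10 = 0 by rewrite PS10.
have hQ10 : QQ b c p0 s0 sg 10 = 0 by rewrite /QQ hb10 hc10; ring.
have hQ0 : QQ b c p0 s0 sg 0 = 0 by rewrite /QQ /=; ring.
have hQa : forall n, ~~ odd n -> (n <= 10)%N -> c0 (QQ b c p0 s0 sg n) = 0.
  move=> n; case: n => [|[|[|[|[|[|[|[|[|[|[|n]]]]]]]]]]] //= _ hn.
  - by have := congr1 c0 hQ0.
  - exact: (hQ 1%N).
  - exact: (hQ 2%N).
  - exact: (hQ 3%N).
  - exact: (hQ 4%N).
  - by have := congr1 c0 hQ10.
have phi10 : phim b c p0 s0 sg 10 = phim b c p0 s0 sg 0.
  rewrite /phim /= /pp /ss hQ10 hQ0 hb10 hc10 //.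
exists (fun i => phim b c p0 s0 sg i); split.
  move=> i; exists (psim b c p0 s0 sg i).
  apply: phiinv => // hi; apply: hQa => //; exact: ltnW (ltn_ord i).
move=> j.
have ex : forall (d : 'I_10 -> Z), xmat d j = Xm (odd j) (bn d j).
  by move=> d; rewrite /bn inord_val.
have ey : forall (d : 'I_10 -> Z), ymat d j = Ym (odd j) (bn d j).
  by move=> d; rewrite /bn inord_val.
rewrite !ex !ey (ord_pred_val j); clear ex ey.
case: j => -[|m] hm /=.
  rewrite -!bn10 -phi10.
  apply: (step b c p0 s0 sg 9%N) => h; by apply: hQa.
apply: step => h; apply: hQa => //=.
- by rewrite ltnW // ltnW.
- by rewrite h.
- by rewrite ltnW.
Qed.



Lemma c0QQ b c p0 s0 sg n : c0 (QQ b c p0 s0 sg n) =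
  s0 * c0 (PS c n) - p0 * c0 (PS b n) - sg * c0 (PS b n) * c0 (PS c n).
Proof. by rewrite /QQ !c0B !c0M !c0cst. Qed.

Definition pv (pat : nat -> nat) m (x1 x2 : CC) :=
  if pat m == 0%N then 0 else if pat m == 1%N then x1 else x2.

Definition good (b : 'I_10 -> Z) (m1 m2 : nat) (pat : nat -> nat) :=
  [/\ c0 (PS b (2 * m1)) != 0, c0 (PS b (2 * m2)) != 0,
      c0 (PS b (2 * m1)) - c0 (PS b (2 * m2)) != 0 &
      forall m, (1 <= m <= 4)%N ->
        c0 (PS b (2 * m)) = pv pat m (c0 (PS b (2 * m1))) (c0 (PS b (2 * m2)))].

Lemma good_iso b c (hb : \sum_(i < 10) b i = 0) (hc : \sum_(i < 10) c i = 0) m1 m2 pat :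
  good b m1 m2 pat -> good c m1 m2 pat -> Misomorphic b c.
Proof.
case=> hx1 hx2 hx12 hxm; case=> hy1 hy2 hy12 hym.
move: hx1 hx2 hx12 hxm hy1 hy2 hy12 hym.
set x1 := c0 (PS b (2 * m1)); set x2 := c0 (PS b (2 * m2)).
set y1 := c0 (PS c (2 * m1)); set y2 := c0 (PS c (2 * m2)).
move=> hx1 hx2 hx12 hxm hy1 hy2 hy12 hym.
apply: (@iso_gen b c hb hc (y1 * y2 * (x1 - x2)) (x1 * x2 * (y1 - y2))
   (- (x1 * y2 - x2 * y1))).
  by rewrite !mulf_neq0.
move=> m hm; rewrite c0QQ (hxm m hm) (hym m hm) /pv.
case: ifP => _; first by ring.
case: ifP => _; ring.
Qed.



Lemma Bsum_inord (b : 'I_10 -> Z) k : (k < 10)%N -> Bsum b (inord k) = bn b k + bn b (k.+1 %% 10).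
Proof. by move=> hk; rewrite /Bsum /bn; congr (_ + b _); apply: val_inj; rewrite /= !inordK // ltn_pmod. Qed.

Lemma ntdvd (f : Z) : ~ tdvd f -> c0 f != 0.
Proof. by move=> h; apply/eqP => /tdvdP. Qed.

Lemma sl (L v r : CC) : L = 0 -> v - r = L -> v = r.
Proof. by move=> -> /eqP; rewrite subr_eq0 => /eqP. Qed.
Lemma slN (L v r : CC) : L = 0 -> v - r = - L -> v = r.
Proof. by move=> -> /eqP; rewrite oppr0 subr_eq0 => /eqP. Qed.
Arguments slN {L v r}.
Lemma neq_by (E F : CC) : F != 0 -> E = F -> E != 0.
Proof. by move=> h ->. Qed.
Lemma neq_byN (E F : CC) : F != 0 -> E = - F -> E != 0.
Proof. by move=> h ->; rewrite oppr_eq0. Qed.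

Arguments sl {L v r}.
Arguments neq_by {E F}.
Arguments neq_byN {E F}.

Ltac normall := repeat match goal with
  | |- context [bn ?b ?n] => let v := eval vm_compute in n in
       progress (rewrite (_ : n = v); last by [])
  | |- context [PS ?b ?n] => let v := eval vm_compute in n in
       progress (rewrite (_ : n = v); last by [])
  end.

Ltac solve_ne := match goal with H : is_true (?F != 0) |- is_true (?E != 0) =>
  first [apply: (neq_by H); ring | apply: (neq_byN H); ring] end.

Ltac solve_for v r H :=
  have : v = r by first [apply: (sl H); ring | apply: (slN H); ring].

Definition pat1 (m : nat) : nat := match m with 1 => 0 | 2 => 1 | 3 => 2 | _ => 1 end.

Lemma good_j1 b (hb : \sum_(i < 10) b i = 0) (h0 : tdvd (Bsum b (inord 1)))
  (hi : forall l, (1 <= l <= 4)%N -> ~ tdvd (Bsum b (shift2 (inord 1) l)))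
  (h12 : ~ tdvd (Bsum b (shift2 (inord 1) 1) + Bsum b (shift2 (inord 1) 2)))
  (h23 : tdvd (Bsum b (shift2 (inord 1) 2) + Bsum b (shift2 (inord 1) 3))) :
  good b 2 3 pat1.
Proof.
have h1 := hi 1%N erefl; have h2 := hi 2%N erefl.
have h3 := hi 3%N erefl; have h4 := hi 4%N erefl.
move/tdvdP: h0 => h0; move/tdvdP: h23 => h23.
move/ntdvd: h1 => h1; move/ntdvd: h2 => h2; move/ntdvd: h3 => h3;
move/ntdvd: h4 => h4; move/ntdvd: h12 => h12.
have hs : c0 (PS b 10) = 0 by rewrite PS10 hb.
clear hi hb.
rewrite /good; split; last (move=> m; case: m => [|[|[|[|[|m]]]]] //= _).
all: move: h0 h1 h2 h3 h4 h12 h23 hs; rewrite /shift2 ?inordK // ?Bsum_inord //; normall.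
all: rewrite /pv /= ?c0D ?c00 ?bn10.
all: move: (coef (bn b 0) 0) (coef (bn b 1) 0) (coef (bn b 2) 0) (coef (bn b 3) 0) (coef (bn b 4) 0)
  (coef (bn b 5) 0) (coef (bn b 6) 0) (coef (bn b 7) 0) (coef (bn b 8) 0) (coef (bn b 9) 0)
  => a0 a1 a2 a3 a4 a5 a6 a7 a8 a9 h0 h1 h2 h3 h4 h12 h23 hs.
all: solve_for a0 (-(a1+a2+a3+a4+a5+a6+a7+a8+a9)) hs => e; subst a0.
all: solve_for a2 (- a1) h0 => e; subst a2.
all: solve_for a8 (-(a5+a6+a7)) h23 => e; subst a8.
all: first [ring | solve_ne].
Qed.

Definition pat3 (m : nat) : nat := match m with 1 => 1 | 2 => 1 | 3 => 0 | _ => 2 end.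

Lemma good_j3 b (hb : \sum_(i < 10) b i = 0) (h0 : tdvd (Bsum b (inord 3)))
  (hi : forall l, (1 <= l <= 4)%N -> ~ tdvd (Bsum b (shift2 (inord 3) l)))
  (h12 : ~ tdvd (Bsum b (shift2 (inord 3) 1) + Bsum b (shift2 (inord 3) 2)))
  (h23 : tdvd (Bsum b (shift2 (inord 3) 2) + Bsum b (shift2 (inord 3) 3))) :
  good b 1 4 pat3.
Proof.
have h1 := hi 1%N erefl; have h2 := hi 2%N erefl.
have h3 := hi 3%N erefl; have h4 := hi 4%N erefl.
move/tdvdP: h0 => h0; move/tdvdP: h23 => h23.
move/ntdvd: h1 => h1; move/ntdvd: h2 => h2; move/ntdvd: h3 => h3;
move/ntdvd: h4 => h4; move/ntdvd: h12 => h12.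
have hs : c0 (PS b 10) = 0 by rewrite PS10 hb.
clear hi hb.
rewrite /good; split; last (move=> m; case: m => [|[|[|[|[|m]]]]] //= _).
all: move: h0 h1 h2 h3 h4 h12 h23 hs; rewrite /shift2 ?inordK // ?Bsum_inord //; normall.
all: rewrite /pv /= ?c0D ?c00 ?bn10.
all: move: (coef (bn b 0) 0) (coef (bn b 1) 0) (coef (bn b 2) 0) (coef (bn b 3) 0) (coef (bn b 4) 0)
  (coef (bn b 5) 0) (coef (bn b 6) 0) (coef (bn b 7) 0) (coef (bn b 8) 0) (coef (bn b 9) 0)
  => a0 a1 a2 a3 a4 a5 a6 a7 a8 a9 h0 h1 h2 h3 h4 h12 h23 hs.
all: solve_for a0 (-(a1+a2+a3+a4+a5+a6+a7+a8+a9)) hs => e; subst a0.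
all: solve_for a4 (- a3) h0 => e; subst a4.
all: solve_for a6 (-(a1+a2+a5)) h23 => e; subst a6.
all: first [ring | solve_ne].
Qed.

Definition pat5 (m : nat) : nat := match m with 1 => 1 | 2 => 2 | 3 => 2 | _ => 1 end.

Lemma good_j5 b (hb : \sum_(i < 10) b i = 0) (h0 : tdvd (Bsum b (inord 5)))
  (hi : forall l, (1 <= l <= 4)%N -> ~ tdvd (Bsum b (shift2 (inord 5) l)))
  (h12 : ~ tdvd (Bsum b (shift2 (inord 5) 1) + Bsum b (shift2 (inord 5) 2)))
  (h23 : tdvd (Bsum b (shift2 (inord 5) 2) + Bsum b (shift2 (inord 5) 3))) :
  good b 1 2 pat5.
Proof.
have h1 := hi 1%N erefl; have h2 := hi 2%N erefl.
have h3 := hi 3%N erefl; have h4 := hi 4%N erefl.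
move/tdvdP: h0 => h0; move/tdvdP: h23 => h23.
move/ntdvd: h1 => h1; move/ntdvd: h2 => h2; move/ntdvd: h3 => h3;
move/ntdvd: h4 => h4; move/ntdvd: h12 => h12.
have hs : c0 (PS b 10) = 0 by rewrite PS10 hb.
clear hi hb.
rewrite /good; split; last (move=> m; case: m => [|[|[|[|[|m]]]]] //= _).
all: move: h0 h1 h2 h3 h4 h12 h23 hs; rewrite /shift2 ?inordK // ?Bsum_inord //; normall.
all: rewrite /pv /= ?c0D ?c00 ?bn10.
all: move: (coef (bn b 0) 0) (coef (bn b 1) 0) (coef (bn b 2) 0) (coef (bn b 3) 0) (coef (bn b 4) 0)
  (coef (bn b 5) 0) (coef (bn b 6) 0) (coef (bn b 7) 0) (coef (bn b 8) 0) (coef (bn b 9) 0)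
  => a0 a1 a2 a3 a4 a5 a6 a7 a8 a9 h0 h1 h2 h3 h4 h12 h23 hs.
all: solve_for a0 (-(a1+a2+a3+a4+a5+a6+a7+a8+a9)) hs => e; subst a0.
all: solve_for a6 (- a5) h0 => e; subst a6.
all: solve_for a8 (-(a3+a4+a7)) h23 => e; subst a8.
all: first [ring | solve_ne].
Qed.

Definition pat7 (m : nat) : nat := match m with 1 => 1 | 2 => 0 | 3 => 2 | _ => 2 end.

Lemma good_j7 b (hb : \sum_(i < 10) b i = 0) (h0 : tdvd (Bsum b (inord 7)))
  (hi : forall l, (1 <= l <= 4)%N -> ~ tdvd (Bsum b (shift2 (inord 7) l)))
  (h12 : ~ tdvd (Bsum b (shift2 (inord 7) 1) + Bsum b (shift2 (inord 7) 2)))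
  (h23 : tdvd (Bsum b (shift2 (inord 7) 2) + Bsum b (shift2 (inord 7) 3))) :
  good b 1 3 pat7.
Proof.
have h1 := hi 1%N erefl; have h2 := hi 2%N erefl.
have h3 := hi 3%N erefl; have h4 := hi 4%N erefl.
move/tdvdP: h0 => h0; move/tdvdP: h23 => h23.
move/ntdvd: h1 => h1; move/ntdvd: h2 => h2; move/ntdvd: h3 => h3;
move/ntdvd: h4 => h4; move/ntdvd: h12 => h12.
have hs : c0 (PS b 10) = 0 by rewrite PS10 hb.
clear hi hb.
rewrite /good; split; last (move=> m; case: m => [|[|[|[|[|m]]]]] //= _).
all: move: h0 h1 h2 h3 h4 h12 h23 hs; rewrite /shift2 ?inordK // ?Bsum_inord //; normall.
all: rewrite /pv /= ?c0D ?c00 ?bn10.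
all: move: (coef (bn b 0) 0) (coef (bn b 1) 0) (coef (bn b 2) 0) (coef (bn b 3) 0) (coef (bn b 4) 0)
  (coef (bn b 5) 0) (coef (bn b 6) 0) (coef (bn b 7) 0) (coef (bn b 8) 0) (coef (bn b 9) 0)
  => a0 a1 a2 a3 a4 a5 a6 a7 a8 a9 h0 h1 h2 h3 h4 h12 h23 hs.
all: solve_for a0 (-(a1+a2+a3+a4+a5+a6+a7+a8+a9)) hs => e; subst a0.
all: solve_for a8 (- a7) h0 => e; subst a8.
all: solve_for a4 (-(a1+a2+a3)) h23 => e; subst a4.
all: first [ring | solve_ne].
Qed.

Definition pat9 (m : nat) : nat := match m with 1 => 1 | 2 => 2 | 3 => 1 | _ => 0 end.

Lemma good_j9 b (hb : \sum_(i < 10) b i = 0) (h0 : tdvd (Bsum b (inord 9)))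
  (hi : forall l, (1 <= l <= 4)%N -> ~ tdvd (Bsum b (shift2 (inord 9) l)))
  (h12 : ~ tdvd (Bsum b (shift2 (inord 9) 1) + Bsum b (shift2 (inord 9) 2)))
  (h23 : tdvd (Bsum b (shift2 (inord 9) 2) + Bsum b (shift2 (inord 9) 3))) :
  good b 1 2 pat9.
Proof.
have h1 := hi 1%N erefl; have h2 := hi 2%N erefl.
have h3 := hi 3%N erefl; have h4 := hi 4%N erefl.
move/tdvdP: h0 => h0; move/tdvdP: h23 => h23.
move/ntdvd: h1 => h1; move/ntdvd: h2 => h2; move/ntdvd: h3 => h3;
move/ntdvd: h4 => h4; move/ntdvd: h12 => h12.
have hs : c0 (PS b 10) = 0 by rewrite PS10 hb.
clear hi hb.
rewrite /good; split; last (move=> m; case: m => [|[|[|[|[|m]]]]] //= _).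
all: move: h0 h1 h2 h3 h4 h12 h23 hs; rewrite /shift2 ?inordK // ?Bsum_inord //; normall.
all: rewrite /pv /= ?c0D ?c00 ?bn10.
all: move: (coef (bn b 0) 0) (coef (bn b 1) 0) (coef (bn b 2) 0) (coef (bn b 3) 0) (coef (bn b 4) 0)
  (coef (bn b 5) 0) (coef (bn b 6) 0) (coef (bn b 7) 0) (coef (bn b 8) 0) (coef (bn b 9) 0)
  => a0 a1 a2 a3 a4 a5 a6 a7 a8 a9 h0 h1 h2 h3 h4 h12 h23 hs.
all: solve_for a0 (-(a1+a2+a3+a4+a5+a6+a7+a8+a9)) hs => e; subst a0.
all: solve_for a8 (-(a1+a2+a3+a4+a5+a6+a7)) h0 => e; subst a8.
all: solve_for a6 (-(a3+a4+a5)) h23 => e; subst a6.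
all: first [ring | solve_ne].
Qed.



Theorem theorem2p4 (b c : 'I_10 -> Z)
  (hb : \sum_(i < 10) b i = 0) (hc : \sum_(i < 10) c i = 0)
  (j : 'I_10) (hj : odd j)
  (hBj : tdvd (Bsum b j)) (hCj : tdvd (Bsum c j))
  (hBi : forall l : nat, (1 <= l <= 4)%N -> ~ tdvd (Bsum b (shift2 j l)))
  (hCi : forall l : nat, (1 <= l <= 4)%N -> ~ tdvd (Bsum c (shift2 j l)))
  (hB12 : ~ tdvd (Bsum b (shift2 j 1) + Bsum b (shift2 j 2)))
  (hB23 : tdvd (Bsum b (shift2 j 2) + Bsum b (shift2 j 3)))
  (hC12 : ~ tdvd (Bsum c (shift2 j 1) + Bsum c (shift2 j 2)))
  (hC23 : tdvd (Bsum c (shift2 j 2) + Bsum c (shift2 j 3))) :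
  Misomorphic b c.
Proof.
move: hj hBj hCj hBi hCi hB12 hB23 hC12 hC23.
rewrite -(inord_val j).
case: j => m hm /=.
case: m hm => [|[|[|[|[|[|[|[|[|[|m]]]]]]]]]] hm //=; move=> hj; rewrite inordK // in hj; try discriminate hj.
all: move=> hBj hCj hBi hCi hB12 hB23 hC12 hC23.
- exact: (good_iso _ _ hb hc _ _ _ (good_j1 _ hb hBj hBi hB12 hB23) (good_j1 _ hc hCj hCi hC12 hC23)).
- exact: (good_iso _ _ hb hc _ _ _ (good_j3 _ hb hBj hBi hB12 hB23) (good_j3 _ hc hCj hCi hC12 hC23)).
- exact: (good_iso _ _ hb hc _ _ _ (good_j5 _ hb hBj hBi hB12 hB23) (good_j5 _ hc hCj hCi hC12 hC23)).
- exact: (good_iso _ _ hb hc _ _ _ (good_j7 _ hb hBj hBi hB12 hB23) (good_j7 _ hc hCj hCi hC12 hC23)).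
- exact: (good_iso _ _ hb hc _ _ _ (good_j9 _ hb hBj hBi hB12 hB23) (good_j9 _ hc hCj hCi hC12 hC23)).
Qed.
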